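(* For every integer $m>1$ and positive integers $w,d$ there is a number $\gamma=f(m,w,d)$ such that the following holds. Let $G$ be a connected graph with $\Delta(G)\leq d$, let $(T,\mathcal{Y})$ be a lean tree-decomposition of $G$ of width at most $w$, let $P$ be a path in $T$, and let $t_1,\ldots,t_{\gamma'}$ with $\gamma'\geq\gamma$ be interior vertices of $P$ occurring along $P$ in this order, such that for some positive integer $s$, $|Y_{t_i}|=s$ for all $i$ and $|Y_t|\ge s$ for all $t$ on $P$ between $t_1$ and $t_{\gamma'}$, and $Y_{t_i}\cap Y_{t_j}=U$ for all distinct $i,j$, for a fixed set $U\subseteq V(G)$. Then there is an integer $k\geq 0$ with $k+m\leq\gamma'$ such that $N(U)\cap\big(Y_P[t_{k+1},t_{k+m})\setminus U\big)=\emptyset$.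
   Context: All graphs are finite and loopless but may have parallel edges. A tree-decomposition of $G$ is a pair $(T,\mathcal{Y})$ where $T$ is a tree and $\mathcal{Y}=\{Y_t\}_{t\in V(T)}$ is a family of subsets of $V(G)$ (bags) such that (W1) $\bigcup_{t} Y_t=V(G)$ and every edge of $G$ has both ends in some $Y_t$; and (W2) if $t'$ lies on the path of $T$ between $t$ and $t''$ then $Y_t\cap Y_{t''}\subseteq Y_{t'}$. Its width is $\max_t(|Y_t|-1)$. It is lean if additionally: (W3) for every two vertices $t,t'$ of $T$ and every positive integer $k$, either $G$ has $k$ vertex-disjoint paths between $Y_t$ and $Y_{t'}$, or some vertex $t''$ on the path of $T$ between $t$ and $t'$ has $|Y_{t''}|<k$; (W4) distinct vertices $t\ne t'$ of $T$ have $Y_t\neq Y_{t'}$; (W5) if $t_0\in V(T)$ and $B$ is a component of $T-t_0$, then $\bigcup_{t\in V(B)}Y_t\setminus Y_{t_0}\neq\emptyset$. For vertices $t',t''$ of the path $P$, $P[t',t'']$ is the subpath of $P$ between them, and $Y_P[t',t'')$ is the union of all bags $Y_t$ such that either $t\in V(P[t',t''])$, or $t\in V(T)\setminus V(P)$ and the unique path in $T$ from $t$ to $P$ ends at a vertex of $P[t',t'']-t''$. For $X\subseteq V(G)$, $N(X)$ is the set of vertices not in $X$ adjacent to some vertex of $X$. *)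

(* Defs.v *)
From mathcomp Require Import all_boot.
Set Implicit Arguments. Unset Strict Implicit. Unset Printing Implicit Defensive.

Definition loopless (V E : finType) (ends : E -> V * V) : Prop :=
  forall e, (ends e).1 != (ends e).2.

Definition adj (V E : finType) (ends : E -> V * V) : rel V :=
  fun u v => [exists e, (ends e == (u, v)) || (ends e == (v, u))].

Definition degree (V E : finType) (ends : E -> V * V) (v : V) : nat :=
  #|[set e | ((ends e).1 == v) || ((ends e).2 == v)]|.

Definition max_degree_le (V E : finType) (ends : E -> V * V) (d : nat) : Prop :=
  forall v, degree ends v <= d.

Definition gconnected (V E : finType) (ends : E -> V * V) : Prop :=
  forall u v, connect (adj ends) u v.

Definition nbh (V E : finType) (ends : E -> V * V) (X : {set V}) : {set V} :=
  [set v | (v \notin X) && [exists u in X, adj ends u v]].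

Definition gpath_between (V E : finType) (ends : E -> V * V) (A B : {set V})
  (p : seq V) : Prop :=
  exists x q, p = x :: q /\ uniq p /\ path (adj ends) x q /\ x \in A /\ last x q \in B.

Definition k_disjoint_paths (V E : finType) (ends : E -> V * V) (k : nat)
  (A B : {set V}) : Prop :=
  exists p : 'I_k -> seq V,
    (forall i, gpath_between ends A B (p i)) /\
    (forall i j, i != j -> forall v, ~ (v \in p i /\ v \in p j)).

Definition tpath (T : finType) (e : rel T) (x : T) (p : seq T) (y : T) : Prop :=
  uniq (x :: p) /\ path e x p /\ last x p = y.

Definition is_tree (T : finType) (e : rel T) : Prop :=
  0 < #|T| /\ symmetric e /\ irreflexive e /\ (forall x y, connect e x y) /\
  ~ (exists x p, uniq (x :: p) /\ 2 <= size p /\ path e x p /\ e (last x p) x).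

Definition on_tpath (T : finType) (e : rel T) (t t' t'' : T) : Prop :=
  exists p, tpath e t p t'' /\ t' \in t :: p.

Definition tree_decomposition (V E T : finType) (ends : E -> V * V) (e : rel T)
  (Y : T -> {set V}) : Prop :=
  (forall v, exists t, v \in Y t) /\
  (forall ed, exists t, ((ends ed).1 \in Y t) && ((ends ed).2 \in Y t)) /\
  (forall t t' t'', on_tpath e t t' t'' -> Y t :&: Y t'' \subset Y t').

Definition td_width_le (V T : finType) (Y : T -> {set V}) (w : nat) : Prop :=
  forall t, #|Y t| <= w.+1.

(* component of T - t0 containing t1 (t1 <> t0) *)
Definition comp_rel (T : finType) (e : rel T) (t0 : T) : rel T :=
  fun x y => [&& e x y, x != t0 & y != t0].

Definition lean (V E T : finType) (ends : E -> V * V) (e : rel T)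
  (Y : T -> {set V}) : Prop :=
  (forall t t' k, 0 < k ->
     k_disjoint_paths ends k (Y t) (Y t') \/
     exists t'', on_tpath e t t'' t' /\ #|Y t''| < k) /\
  (forall t t', t != t' -> Y t != Y t') /\
  (* W5: every component B of T - t0 (given by any of its vertices t1) *)
  (forall t0 t1, t1 != t0 ->
     exists t, connect (comp_rel e t0) t1 t /\ Y t :\: Y t0 != set0).

Definition lean_tree_decomposition (V E T : finType) (ends : E -> V * V)
  (e : rel T) (Y : T -> {set V}) : Prop :=
  tree_decomposition ends e Y /\ lean ends e Y.

Definition tree_path_seq (T : finType) (e : rel T) (P : seq T) : Prop :=
  P != [::] /\ uniq P /\ sorted e P.

(* the unique path in T from t to P ends at x *)
Definition attaches_at (T : finType) (e : rel T) (P : seq T) (t x : T) : Prop :=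
  x \in P /\ exists p, tpath e t p x /\ all (fun z => z \notin P) (belast t p).

(* membership in Y_P[t', t''), where t', t'' are the vertices of P at
   positions a <= b (positions in the sequence P) *)
Definition in_YP (V T : finType) (e : rel T) (Y : T -> {set V}) (P : seq T)
  (a b : nat) (v : V) : Prop :=
  exists t, v \in Y t /\
    ((t \in P /\ a <= index t P <= b) \/
     (t \notin P /\ exists x, attaches_at e P t x /\ a <= index x P < b)).

(* Main.v *)
Require Import Defs.
From mathcomp Require Import all_boot zify.
From Stdlib Require Import ClassicalEpsilon Classical.
Set Implicit Arguments. Unset Strict Implicit. Unset Printing Implicit Defensive.

Lemma card_bigcup_le (V I : finType) (A : I -> {set V}) (P : pred I) :
  #|\bigcup_(i | P i) A i| <= \sum_(i | P i) #|A i|.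
Proof.
elim/big_rec2: _ => [|i n U _ le]; first by rewrite cards0.
by rewrite (leq_trans (leq_card_setU _ _).1) ?leq_add2l.
Qed.

Section Legs.
Variables (T : finType) (e : rel T) (P : seq T).
Hypothesis esym : symmetric e.

Lemma split_ex (s : seq T) z : z \in s -> exists p1 p2, s = p1 ++ z :: p2.
Proof. by case/splitPr => p1 p2; exists p1, p2. Qed.

Lemma suffix_leg x p z : z \in x :: p ->
  exists p2, [/\ path e x p -> path e z p2, uniq (x :: p) -> uniq (z :: p2),
    last z p2 = last x p, {subset belast z p2 <= belast x p} & size p2 <= size p].
Proof.
case/split_ex => p1 [p2 E].
exists p2; split.
- have -> : path e x p = path e x (behead (x :: p)) by [].
  rewrite E; case: p1 E => [|a p1] /= E; first by case: E => ? ?; subst.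
  case: E => ? ?; subst; rewrite cat_path => /andP[_] /=. by case/andP.
- by rewrite E cat_uniq => /and3P[_ _].
- have -> : last x p = last x (x :: p) by [].
  by rewrite E last_cat.
- case: p1 E => [|a p1] /=; first by case=> -> ->.
  case=> -> ->; rewrite belast_cat /= => y Hy.
  by rewrite mem_cat inE Hy !orbT.
- have : size (x :: p) = size (p1 ++ z :: p2) by rewrite E.
  rewrite size_cat /= addnS => -[->]; by rewrite leq_addl.
Qed.

Hypothesis acyc :
  ~ (exists x p, uniq (x :: p) /\ 2 <= size p /\ path e x p /\ e (last x p) x).

Definition offP (y : T) := y \notin P.

Lemma path_flip x q : path (fun a b => e b a) x q = path e x q.
Proof. by apply: eq_path => a b; rewrite esym. Qed.

Lemma rev_leg z q : path e z q ->
  path e (last z q) (rev (belast z q)).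
Proof. by move=> H; rewrite rev_path path_flip. Qed.

Lemma uniq_belast (z : T) q : uniq (z :: q) -> uniq (belast z q).
Proof. by rewrite lastI rcons_uniq => /andP[]. Qed.

Lemma two_legs_step z p q s
  (IH : forall z' p2 q2, size p2 < size p ->
     path e z' p2 -> uniq (z' :: p2) -> path e z' q2 -> uniq (z' :: q2) ->
     all offP (belast z' p2) -> all offP (belast z' q2) ->
     last z' p2 = last z p -> last z' q2 = last z q -> False) :
  path e z p -> uniq (z :: p) -> path e z q -> uniq (z :: q) ->
  all offP (belast z p) -> all offP (belast z q) ->
  last z p \in P -> last z q \in P ->
  path e (last z p) s -> last (last z p) s = last z q ->
  uniq (last z p :: s) -> all (mem P) s -> s != [::] -> False.
Proof.
move=> pp up pq uq op oq x1P x2P ps ls us sP sn.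
case: p IH pp up op x1P ps ls us => [|a p'] IH pp up op x1P ps ls us.
  case: q IH pq uq oq x2P ls => [|b q'] IH pq uq oq x2P ls.
    case: s ps ls us sP sn => [|c s'] //= _ ls.
    have : last c s' \in c :: s' by rewrite mem_last.
    by rewrite ls /= => ->.
  by move: oq => /= /andP[]; rewrite /offP x1P.
case: q IH pq uq oq x2P ls => [|b q'] IH pq uq oq x2P ls.
  by move: op => /= /andP[]; rewrite /offP x2P.
set A := belast a p'; set B := belast b q'.
have zoff : z \notin P by move: op => /= /andP[].
case: (boolP (has (mem B) A)).
  case/hasP => z' zA zB.
  have [p2 [pp2 up2 lp2 sp2 szp2]] := suffix_leg (mem_belast zA).
  have [q2 [pq2 uq2 lq2 sq2 szq2]] := suffix_leg (mem_belast zB).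
  move: pp pq op oq => /= /andP[_ pp] /andP[_ pq] /andP[_ op] /andP[_ oq].
  move: up uq => /andP[_ up] /andP[_ uq].
  apply: (IH z' p2 q2) => //.
  - by exact: pp2.
  - by exact: up2.
  - by exact: pq2.
  - by exact: uq2.
  - by apply/allP => y /sp2 /(allP op).
  - by apply/allP => y /sq2 /(allP oq).
move=> nhas.
have uB : uniq (z :: B) by apply: (uniq_belast uq).
have x1ns : last z (a :: p') \notin s by move: us => /= /andP[].
apply: acyc; exists z, ((a :: p') ++ s ++ rev B); split; [|split; [|split]].
- rewrite -cat_cons cat_uniq; apply/and3P; split => //.
    apply/hasPn => y; rewrite mem_cat => /orP[ys|].
      have yP : y \in P by apply: (allP sP).
      rewrite lastI mem_rcons inE negb_or; apply/andP; split.
        by apply: contraNneq x1ns => <-.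
      by apply: contraTN yP => /(allP op).
    rewrite mem_rev => yB.
    have yoff : y \notin P by apply: (allP oq); rewrite /= inE yB orbT.
    rewrite lastI mem_rcons inE negb_or; apply/andP; split.
      by apply: contraNneq yoff => ->.
    rewrite /= inE negb_or; apply/andP; split.
      by apply: contraTneq yB => ->; case/andP: uB.
    by apply: contraNN nhas => yA; apply/hasP; exists y.
  rewrite cat_uniq rev_uniq; apply/and3P; split.
  - by move: us => /= /andP[].
  - apply/hasPn => y; rewrite mem_rev => yB.
    have yoff : y \notin P by apply: (allP oq); rewrite /= inE yB orbT.
    by apply: contraNN yoff => /(allP sP).
  - by move: uB => /= /andP[].
- by case: s sn {ps ls us sP x1ns} => [|c s'] //= _; rewrite size_cat /= addnS.
- rewrite cat_path pp /= cat_path ps /= ls.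
  have := rev_leg pq; rewrite /= rev_cons rcons_path => /andP[] //.
- rewrite !last_cat /= ls.
  by have := rev_leg pq; rewrite /= rev_cons rcons_path => /andP[].
Qed.

Lemma two_legs n : forall z p q s, size p <= n ->
  path e z p -> uniq (z :: p) -> path e z q -> uniq (z :: q) ->
  all offP (belast z p) -> all offP (belast z q) ->
  last z p \in P -> last z q \in P ->
  path e (last z p) s -> last (last z p) s = last z q ->
  uniq (last z p :: s) -> all (mem P) s -> s != [::] -> False.
Proof.
elim: n => [|n IH] z p q s Hs pp up pq uq op oq x1 x2 ps ls us sP sn;
  apply: (@two_legs_step z p q s) => // z' p2 q2 Hlt pp2 up2 pq2 uq2 op2 oq2 l1 l2.
  by have := leq_trans Hlt Hs.
apply: (IH z' p2 q2 s) => //; rewrite ?l1 ?l2 //.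
by rewrite -ltnS (leq_trans Hlt Hs).
Qed.

Lemma last_rev_belast (t : T) p : last (last t p) (rev (belast t p)) = t.
Proof.
have -> : last (last t p) (rev (belast t p)) = last t (last t p :: rev (belast t p)) by [].
by rewrite -rev_rcons -lastI rev_cons last_rcons.
Qed.

Lemma join t1 p1 t2 p2 s :
  path e t1 p1 -> uniq (t1 :: p1) -> all offP (belast t1 p1) -> last t1 p1 \in P ->
  path e t2 p2 -> uniq (t2 :: p2) -> all offP (belast t2 p2) -> last t2 p2 \in P ->
  path e (last t1 p1) s -> last (last t1 p1) s = last t2 p2 ->
  uniq (last t1 p1 :: s) -> all (mem P) s -> s != [::] ->
  exists r, tpath e t1 r t2 /\ {subset s <= t1 :: r}.
Proof.
move=> pp up op x1P pq uq oq x2P ps ls us sP sn.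
case: (boolP (has (mem (belast t2 p2)) (belast t1 p1))).
  case/hasP => z zA zB; exfalso.
  have [pz [ppz upz lpz spz _]] := suffix_leg (mem_belast zA).
  have [qz [pqz uqz lqz sqz _]] := suffix_leg (mem_belast zB).
  apply: (@two_legs (size pz) z pz qz s) => //; rewrite ?lpz ?lqz //.
  - by apply: ppz.
  - by apply: upz.
  - by apply: pqz.
  - by apply: uqz.
  - by apply/allP => y /spz /(allP op).
  - by apply/allP => y /sqz /(allP oq).
move=> nhas.
set B := belast t2 p2.
have uB : uniq B by apply: uniq_belast.
have x1ns : last t1 p1 \notin s by move: us => /= /andP[].
exists (p1 ++ s ++ rev B); split; last first.
  by move=> y ys; rewrite in_cons mem_cat mem_cat ys !orbT.
split; [|split].
- rewrite -cat_cons cat_uniq; apply/and3P; split => //.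
    apply/hasPn => y; rewrite mem_cat => /orP[ys|].
      have yP : y \in P by apply: (allP sP).
      rewrite lastI mem_rcons inE negb_or; apply/andP; split.
        by apply: contraNneq x1ns => <-.
      by apply: contraTN yP => /(allP op).
    rewrite mem_rev => yB.
    have yoff : y \notin P by apply: (allP oq).
    rewrite lastI mem_rcons inE negb_or; apply/andP; split.
      by apply: contraNneq yoff => ->.
    by apply: contraNN nhas => yA; apply/hasP; exists y.
  rewrite cat_uniq rev_uniq; apply/and3P; split => //.
  - by move: us => /= /andP[].
  - apply/hasPn => y; rewrite mem_rev => yB.
    have yoff : y \notin P by apply: (allP oq).
    by apply: contraNN yoff => /(allP sP).
- by rewrite cat_path pp /= cat_path ps /= ls rev_leg.
- by rewrite !last_cat ls last_rev_belast.
Qed.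
End Legs.
Lemma segment (T : finType) (e : rel T) (P : seq T) x0 i1 i2 :
  uniq P -> sorted e P -> i1 < i2 -> i2 < size P ->
  exists s, [/\ path e (nth x0 P i1) s, last (nth x0 P i1) s = nth x0 P i2,
    uniq (nth x0 P i1 :: s), all (mem P) s &
    s != [::] /\ forall i, i1 < i <= i2 -> nth x0 P i \in s].
Proof.
move=> uP sP lt12 lt2.
set D := drop i1.+1 P; set k := i2 - i1.
have sD : size D = size P - i1.+1 by rewrite size_drop.
have kD : k <= size D by rewrite sD /k; lia.
have Pdec : P = take i1 P ++ nth x0 P i1 :: D.
  by rewrite /D -drop_nth ?cat_take_drop //; lia.
have szs : size (take k D) = k by rewrite size_takel.
exists (take k D); split.
- apply: take_path; move: sP; rewrite {1}Pdec sorted_cat_cons => /andP[] //.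
- rewrite (last_nth x0) szs.
  have -> : k = (k.-1).+1 by rewrite /k; lia.
  rewrite /= nth_take; last by rewrite /k; lia.
  rewrite /D nth_drop; congr nth; rewrite /k; lia.
- have : uniq (take k.+1 (drop i1 P)) by rewrite take_uniq ?drop_uniq.
  by rewrite (drop_nth x0) //; lia.
- by apply/allP => y /mem_take /mem_drop.
split.
- by rewrite -size_eq0 szs /k; lia.
- move=> i /andP[h1 h2].
  have -> : nth x0 P i = nth x0 (take k D) (i - i1.+1).
    by rewrite nth_take /D ?nth_drop; [congr nth|]; rewrite /k; lia.
  by apply: mem_nth; rewrite szs /k; lia.
Qed.

Lemma in_YP_leg (V T : finType) (e : rel T) (Y : T -> {set V}) (P : seq T) a b v :
  in_YP e Y P a b v -> exists t p, [/\ v \in Y t, path e t p, uniq (t :: p),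
    all (offP P) (belast t p) & last t p \in P /\ a <= index (last t p) P <= b].
Proof.
case=> t [vt [[tP hab]|[tnP [x [[xP [p [[up [pp lp] op]]] hab]]]]]].
  by exists t, [::]; split.
exists t, p; split => //; rewrite lp; split => //.
by case/andP: hab => -> /ltnW.
Qed.

Lemma nbh_card (V E : finType) (ends : E -> V * V) (U : {set V}) d :
  max_degree_le ends d -> #|nbh ends U| <= #|U| * d.
Proof.
move=> Hd.
pose other u (ed : E) := if (ends ed).1 == u then (ends ed).2 else (ends ed).1.
have sub : nbh ends U \subset
    \bigcup_(u in U) (other u @: [set ed | ((ends ed).1 == u) || ((ends ed).2 == u)]).
  apply/subsetP => v; rewrite inE => /andP[_ /existsP[u /andP[uU /existsP[ed He]]]].
  apply/bigcupP; exists u => //; apply/imsetP; exists ed.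
    by rewrite inE; case/orP: He => /eqP -> /=; rewrite ?eqxx ?orbT.
  rewrite /other; case/orP: He => /eqP -> /=; rewrite ?eqxx //.
  by case: eqP => // ->.
apply: (leq_trans (subset_leq_card sub)); apply: (leq_trans (card_bigcup_le _ _)).
rewrite -sum_nat_const; apply: leq_sum => u _.
exact: (leq_trans (leq_imset_card _ _) (Hd u)).
Qed.

Theorem lemma6p6 :
  forall m w d : nat, 1 < m -> 0 < w -> 0 < d ->
  exists gamma : nat,
  forall (V E : finType) (ends : E -> V * V),
    loopless ends -> gconnected ends -> max_degree_le ends d ->
  forall (T : finType) (eT : rel T) (Y : T -> {set V}),
    is_tree eT -> lean_tree_decomposition ends eT Y -> td_width_le Y w ->
  forall (P : seq T), tree_path_seq eT P ->
  forall (g' : nat) (tt : nat -> T) (s : nat) (U : {set V}),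
    gamma <= g' ->
    (* t_1, ..., t_g' are interior vertices of P, in this order along P *)
    (forall i, 1 <= i <= g' ->
       tt i \in P /\ 0 < index (tt i) P < (size P).-1) ->
    (forall i, 1 <= i < g' -> index (tt i) P < index (tt i.+1) P) ->
    0 < s ->
    (forall i, 1 <= i <= g' -> #|Y (tt i)| = s) ->
    (forall t, t \in P -> index (tt 1) P <= index t P <= index (tt g') P ->
       s <= #|Y t|) ->
    (forall i j, 1 <= i <= g' -> 1 <= j <= g' -> i != j ->
       Y (tt i) :&: Y (tt j) = U) ->
  exists k : nat, k + m <= g' /\
    ~ (exists v, v \in nbh ends U /\ v \notin U /\
         in_YP eT Y P (index (tt k.+1) P) (index (tt (k + m)) P) v).
Proof.
move=> m w d Hm Hw Hd.
exists (m * (2 * (w.+1 * d)).+1).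
move=> V E ends Hll Hconn Hdeg T eT Y Htree [[HW1 [HW1e HW2]] Hlean] Hwid P HP
  g' tt s U Hg Hin Hord Hs Hcard Hge HU.
set n := (2 * (w.+1 * d)).+1.
have [_ [esym [_ [_ acyc]]]] := Htree.
have [Pn0 [uP sP]] := HP.
have mono : forall i j, 1 <= i -> i < j -> j <= g' -> index (tt i) P < index (tt j) P.
  move=> i j hi; elim: j => // j IH hij hj.
  rewrite ltnS leq_eqVlt in hij; case/orP: hij => [/eqP ?|hij]; first subst.
    by apply: Hord; apply/andP; split; lia.
  by apply: ltn_trans (IH hij _) (Hord j _); try apply/andP; try split; lia.
have g2 : 2 <= g'.
  apply: leq_trans Hg; rewrite /n; nia.
apply: NNPP => Hno.
have Hall : forall j : 'I_n, exists v, v \in nbh ends U /\ v \notin U /\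
    in_YP eT Y P (index (tt (j * m).+1) P) (index (tt (j * m + m)) P) v.
  move=> j; apply: NNPP => Hnv; apply: Hno; exists (j * m); split => //.
  apply: leq_trans Hg; have := ltn_ord j; rewrite mulnC; nia.
pose f (j : 'I_n) := proj1_sig (constructive_indefinite_description _ (Hall j)).
have fP : forall j, f j \in nbh ends U /\ f j \notin U /\
    in_YP eT Y P (index (tt (j * m).+1) P) (index (tt (j * m + m)) P) (f j).
  by move=> j; rewrite /f; case: constructive_indefinite_description.
have far : forall j1 j2 : 'I_n, j1 + 2 <= j2 -> f j1 = f j2 -> False.
  move=> j1 j2 hj fe.
  have [_ [vU1 H1]] := fP j1; have [_ [_ H2]] := fP j2.
  rewrite -fe in H2; set v := f j1 in vU1 H1 H2.
  have j2n := ltn_ord j2.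
  have j2g : j2 * m + m <= g' by apply: leq_trans Hg; nia.
  have [t1 [p1 [vt1 pp1 up1 op1 [x1P /andP[_ hx1]]]]] := in_YP_leg H1.
  have [t2 [p2 [vt2 pp2 up2 op2 [x2P /andP[hx2 _]]]]] := in_YP_leg H2.
  set x1 := last t1 p1 in x1P hx1; set x2 := last t2 p2 in x2P hx2.
  have key : forall y, y \in P -> index x1 P < index y P <= index x2 P -> v \in Y y.
    move=> y yP /andP[h1 h2].
    have i12 : index x1 P < index x2 P by apply: leq_trans h2.
    have i2s : index x2 P < size P by rewrite index_mem.
    have [sg [ps ls us sPs [sn sin]]] := segment x1 uP sP i12 i2s.
    rewrite !nth_index // in ps ls us.
    have [r [tr rs]] := @join T eT P esym acyc t1 p1 t2 p2 sg pp1 up1 op1 x1P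
       pp2 up2 op2 x2P ps ls us sPs sn.
    have ys : y \in sg by rewrite -(nth_index x1 yP); apply: sin; rewrite h1 h2.
    have : v \in Y t1 :&: Y t2 by rewrite inE vt1 vt2.
    by apply/subsetP; apply: HW2; exists r; split => //; apply: rs.
  have hjm : j1 * m + 2 * m <= j2 * m by rewrite -mulnDl leq_mul2r hj orbT.
  have vin : forall a, j1 * m + m < a -> a < (j2 * m).+1 -> v \in Y (tt a).
    move=> a ha1 ha2.
    have ag : 1 <= a <= g' by apply/andP; split; clear -ha1 ha2 hjm j2g Hm; lia.
    have [aP _] := Hin a ag.
    have m1 : index (tt (j1 * m + m)) P < index (tt a) P.
      by apply: mono => //; clear -ha1 ha2 hjm j2g Hm; lia.
    have m2 : index (tt a) P < index (tt (j2 * m).+1) P.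
      by apply: mono => //; clear -ha1 ha2 hjm j2g Hm; lia.
    apply: key => //; apply/andP; split.
      exact: leq_ltn_trans hx1 m1.
    exact: leq_trans (ltnW m2) hx2.
  have va := vin (j1 * m + m + 1) ltac:(clear -hjm j2g Hm; lia) ltac:(clear -hjm j2g Hm; lia).
  have vb := vin (j1 * m + m + 2) ltac:(clear -hjm j2g Hm; lia) ltac:(clear -hjm j2g Hm; lia).
  have : v \in Y (tt (j1 * m + m + 1)) :&: Y (tt (j1 * m + m + 2)) by rewrite inE va vb.
  rewrite HU; first by rewrite (negbTE vU1).
  - by apply/andP; split; clear -hjm j2g Hm; lia.
  - by apply/andP; split; clear -hjm j2g Hm; lia.
  - by rewrite neq_ltn; apply/orP; left; clear; lia.
pose g (j : 'I_n) := (f j, odd j).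
have ginj : injective g.
  move=> j1 j2 [fe oe]; apply: val_inj => /=.
  case: (ltngtP j1 j2) => // h.
  - exfalso; case: (ltngtP (j1 + 2) j2.+1) => h2.
    + by apply: (far j1 j2) => //; clear -h2; lia.
    + clear -h h2; lia.
    + have ej : nat_of_ord j2 = (nat_of_ord j1).+1 by clear -h h2; lia.
      by move: oe; rewrite ej /=; case: (odd j1).
  - exfalso; case: (ltngtP (j2 + 2) j1.+1) => h2.
    + by apply: (far j2 j1) => //; clear -h2; lia.
    + clear -h h2; lia.
    + have ej : nat_of_ord j1 = (nat_of_ord j2).+1 by clear -h h2; lia.
      by move: oe; rewrite ej /=; case: (odd j2).
have : #|g @: [set: 'I_n]| <= #|setX (nbh ends U) [set: bool]|.
  apply: subset_leq_card; apply/subsetP => x /imsetP[j _ ->].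
  by rewrite inE /= in_setT (proj1 (fP j)).
rewrite card_imset // cardsX !cardsT card_ord card_bool.
have hU : #|U| <= w.+1.
  rewrite -(HU 1 2) ?(leq_trans (subset_leq_card (subsetIl _ _)) (Hwid _)) //;
    apply/andP; split => //; clear -g2; lia.
have h3 := nbh_card U Hdeg.
have h4 : #|U| * d <= w.+1 * d by rewrite leq_mul2r hU orbT.
rewrite /n => h5; clear -h3 h4 h5; lia.
Qed.
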